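(* Let $\mathcal{H}$ be a complex Hilbert space and let $B,C\in\mathcal{B}(\mathcal{H})$ be self-adjoint. Then $$\max\left\{\|B+C\|^2,\|B-C\|^2\right\}\le\|B^2+C^2\|+2\,w(|B||C|).$$
   Context: $\mathcal{B}(\mathcal{H})$ is the algebra of bounded linear operators on $\mathcal{H}$ with operator norm $\|\cdot\|$. For $A\in\mathcal{B}(\mathcal{H})$, $|A|=(A^*A)^{1/2}$ and $w(A)=\sup_{\|x\|=1}|\langle Ax,x\rangle|$ is the numerical radius. *)

(* Defs.v *)
From HB Require Import structures.
From mathcomp Require Import all_boot all_order all_algebra.
From mathcomp Require Import classical_sets reals.
From mathcomp Require Import complex.
Set Implicit Arguments. Unset Strict Implicit. Unset Printing Implicit Defensive.
Import Order.TTheory GRing.Theory Num.Theory.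
Local Open Scope ring_scope.
Local Open Scope classical_set_scope.

Section Hilbert.
Variable R : realType.
Local Notation C := (R[i]).
Variable V : lmodType C.
Variable ip : V -> V -> C.

(* complex inner product: linear in the first argument, Hermitian, positive
   definite (0 <= z in C means z is a nonnegative real) *)
Definition is_inner_product : Prop :=
  [/\ forall (a : C) (x y z : V), ip (a *: x + y) z = a * ip x z + ip y z,
      forall x y : V, ip y x = Num.conj (ip x y),
      forall x : V, 0 <= ip x x
    & forall x : V, ip x x = 0 -> x = 0].

Definition hnorm (x : V) : R := Num.sqrt (@complex.Re R (ip x x)).

Definition cmod (z : C) : R := Num.sqrt (@complex.Re R z ^+ 2 + @complex.Im R z ^+ 2).

Definition complete_ip : Prop :=
  forall u : nat -> V,
    (forall e : R, 0 < e -> exists N, forall m n, (N <= m)%N -> (N <= n)%N ->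
        hnorm (u m - u n) < e) ->
    exists l : V, forall e : R, 0 < e -> exists N, forall n, (N <= n)%N ->
        hnorm (u n - l) < e.

Definition bounded_op (T : V -> V) : Prop :=
  (forall (a : C) (x y : V), T (a *: x + y) = a *: T x + T y) /\
  exists M : R, forall x, hnorm (T x) <= M * hnorm x.

Definition opnorm (T : V -> V) : R :=
  sup [set r : R | exists x : V, hnorm x <= 1 /\ r = hnorm (T x)].

Definition numrad (T : V -> V) : R :=
  sup [set r : R | exists x : V, hnorm x = 1 /\ r = cmod (ip (T x) x)].

Definition selfadjoint (T : V -> V) : Prop :=
  forall x y : V, ip (T x) y = ip x (T y).

(* P = |A| = (A^* A)^{1/2}: P is a bounded positive operator with
   P^2 = A^* A, i.e. <P (P x), y> = <A x, A y> for all x, y *)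
Definition is_abs (A P : V -> V) : Prop :=
  [/\ bounded_op P, forall x : V, 0 <= ip (P x) x
    & forall x y : V, ip (P (P x)) y = ip (A x) (A y)].

End Hilbert.

(* Main.v *)
Require Import Defs.
From HB Require Import structures.
From mathcomp Require Import all_boot all_order all_algebra.
From mathcomp Require Import boolp classical_sets reals.
From mathcomp Require Import complex.
From mathcomp Require Import ring lra.
Import Order.TTheory GRing.Theory Num.Theory.
Local Open Scope ring_scope.
Local Open Scope complex_scope.
Set Implicit Arguments. Unset Strict Implicit.

Lemma cs_real (R : realFieldType) (a b c : R) : 0 <= c ->
  (forall t, 0 <= a + 2 * t * b + t ^+ 2 * c) -> b ^+ 2 <= a * c.
Proof.
move=> c0 h; have [cz|cp] := eqVneq c 0.
  have [bz|bn] := eqVneq b 0; first by rewrite bz cz expr0n /= mulr0.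
  have := h (- (a + 1) / (2 * b)); rewrite cz mulr0 addr0.
  have -> : 2 * (- (a + 1) / (2 * b)) * b = - (a + 1).
    by field.
  move=> hh; exfalso; lra.
have cpos : 0 < c by rewrite lt_def cp c0.
have := h (- b / c).
have e : - b / c * c = - b by field.
set t := - b / c in e *.
move=> ht.
have : 0 <= (a + t * b) * c.
  apply: mulr_ge0; last exact: c0.
  have -> : a + t * b = a + 2 * t * b + t ^+ 2 * c.
    have e2 : t ^+ 2 * c = - (t * b) by rewrite expr2 -mulrA e mulrN.
    rewrite e2; ring.
  exact: ht.
rewrite mulrDl -mulrA (mulrC b c) mulrA e expr2.
move=> hh; lra.
Qed.

Lemma squeeze (R : realType) (K M : R) (a f : nat -> R) :
  (forall n, 0 <= f n) -> (forall n, f n.+1 <= f n - a n ^+ 2) ->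
  (forall n, 0 <= a n) -> (forall n, - (M * a n) <= K) -> 0 <= K.
Proof.
move=> f0 fS a0 hK; rewrite leNgt; apply/negP => Kneg.
have Mpos : 0 < M.
  rewrite ltNge; apply/negP => Ml.
  have := hK 0%N; have := a0 0%N; move=> h1 h2.
  have : M * a 0%N <= 0 by rewrite mulr_le0_ge0.
  lra.
set d := (- K / M).
have dpos : 0 < d by rewrite /d divr_gt0 // oppr_gt0.
have ad : forall n, d <= a n.
  move=> n; rewrite /d ler_pdivrMr // mulrC; have := hK n; lra.
have ad2 : forall n, d ^+ 2 <= a n ^+ 2.
  by move=> n; rewrite ler_sqr // ?nnegrE ?(ltW dpos).
have fn : forall n, f n <= f 0%N - n%:R * d ^+ 2.
  elim=> [|n IH]; first by rewrite mul0r subr0.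
  have := fS n; have := ad2 n; rewrite -natr1 mulrDl mul1r; lra.
have d2 : 0 < d ^+ 2 by rewrite exprn_gt0.
set n := Num.Def.trunc (f 0%N / d ^+ 2).
have := truncnS_gt (f 0%N / d ^+ 2); rewrite -/n ltr_pdivrMr // => hn.
have := fn n.+1; have := f0 n.+1; lra.
Qed.

Section Basics.
Variable R : realType.
Variable V : lmodType R[i].
Variable ip : V -> V -> R[i].
Hypothesis hip : is_inner_product ip.

Definition rr (x y : V) : R := complex.Re (ip x y).

Lemma ipL a x y z : ip (a *: x + y) z = a * ip x z + ip y z.
Proof. by case: hip => h _ _ _; apply: h. Qed.
Lemma ipH x y : ip y x = conjc (ip x y).
Proof. by case: hip => _ h _ _; apply: h. Qed.
Lemma ipP x : 0 <= ip x x.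
Proof. by case: hip => _ _ h _; apply: h. Qed.
Lemma ipD x : ip x x = 0 -> x = 0.
Proof. by case: hip => _ _ _ h; apply: h. Qed.

Lemma ip0l z : ip 0 z = 0.
Proof.
have := ipL 1 0 0 z; rewrite scaler0 addr0 mul1r => h.
by rewrite -{1}[ip 0 z]addr0 in h; rewrite -(addrI _ h).
Qed.
Lemma ipDl x y z : ip (x + y) z = ip x z + ip y z.
Proof. by rewrite -[x]scale1r ipL mul1r scale1r. Qed.
Lemma ipZl a x z : ip (a *: x) z = a * ip x z.
Proof. by rewrite -[a *: x]addr0 ipL ip0l addr0. Qed.
Lemma ipNl x z : ip (- x) z = - ip x z.
Proof. by rewrite -scaleN1r ipZl mulN1r. Qed.
Lemma ipBl x y z : ip (x - y) z = ip x z - ip y z.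
Proof. by rewrite ipDl ipNl. Qed.

Lemma Re_conj (w : R[i]) : complex.Re (conjc w) = complex.Re w.
Proof. by case: w. Qed.
Lemma Re_add (a b : R[i]) : complex.Re (a + b) = complex.Re a + complex.Re b.
Proof. by case: a; case: b. Qed.
Lemma Re_opp (a : R[i]) : complex.Re (- a) = - complex.Re a.
Proof. by case: a. Qed.
Lemma Re_realM (t : R) (a : R[i]) : complex.Re (t%:C * a) = t * complex.Re a.
Proof. by case: a => a b /=; rewrite mul0r subr0. Qed.
Lemma Im_realM (t : R) (a : R[i]) : complex.Im (t%:C * a) = t * complex.Im a.
Proof. by case: a => a b /=; rewrite mul0r addr0. Qed.

Lemma rrC x y : rr x y = rr y x.
Proof. by rewrite /rr ipH Re_conj. Qed.
Lemma rrDl x y z : rr (x + y) z = rr x z + rr y z.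
Proof. by rewrite /rr ipDl Re_add. Qed.
Lemma rrDr x y z : rr z (x + y) = rr z x + rr z y.
Proof. by rewrite rrC rrDl rrC (rrC y). Qed.
Lemma rrNl x z : rr (- x) z = - rr x z.
Proof. by rewrite /rr ipNl Re_opp. Qed.
Lemma rrNr x z : rr z (- x) = - rr z x.
Proof. by rewrite rrC rrNl rrC. Qed.
Lemma rrBl x y z : rr (x - y) z = rr x z - rr y z.
Proof. by rewrite rrDl rrNl. Qed.
Lemma rrBr x y z : rr z (x - y) = rr z x - rr z y.
Proof. by rewrite rrDr rrNr. Qed.
Lemma rrZl (t : R) x z : rr (t%:C *: x) z = t * rr x z.
Proof. by rewrite /rr ipZl Re_realM. Qed.
Lemma rrZr (t : R) x z : rr z (t%:C *: x) = t * rr z x.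
Proof. by rewrite rrC rrZl rrC. Qed.
Lemma rr0l z : rr 0 z = 0.
Proof. by rewrite /rr ip0l. Qed.
Lemma rr0r z : rr z 0 = 0.
Proof. by rewrite rrC rr0l. Qed.

Lemma ipxx x : ip x x = (rr x x)%:C.
Proof.
have := ipP x; rewrite /rr; case: (ip x x) => a b.
rewrite lecE /= => /andP[/eqP h _]. by rewrite h.
Qed.
Lemma rr_ge0 x : 0 <= rr x x.
Proof. by have := ipP x; rewrite ipxx lecR. Qed.
Lemma rr_eq0 x : rr x x = 0 -> x = 0.
Proof. by move=> h; apply: ipD; rewrite ipxx h. Qed.

Lemma hnormE x : hnorm ip x = Num.sqrt (rr x x).
Proof. by []. Qed.
Lemma hnorm_ge0 x : 0 <= hnorm ip x.
Proof. exact: sqrtr_ge0. Qed.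
Lemma hnorm2 x : hnorm ip x ^+ 2 = rr x x.
Proof. by rewrite hnormE sqr_sqrtr // rr_ge0. Qed.

Local Notation nrm := (hnorm ip).

Definition lin (T : V -> V) := forall (a : R[i]) x y, T (a *: x + y) = a *: T x + T y.
Definition sa (T : V -> V) := forall x y, rr (T x) y = rr x (T y).
Definition pos (T : V -> V) := forall x, 0 <= rr (T x) x.

Section LinT.
Variable T : V -> V.
Hypothesis hT : lin T.
Lemma lin0 : T 0 = 0.
Proof.
have := hT 1 0 0; rewrite scaler0 addr0 scale1r => h.
by rewrite -{1}[T 0]addr0 in h; rewrite -(addrI _ h).
Qed.
Lemma linD x y : T (x + y) = T x + T y.
Proof. by rewrite -{1}[x]scale1r hT scale1r. Qed.
Lemma linZ a x : T (a *: x) = a *: T x.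
Proof. by rewrite -[a *: x]addr0 hT lin0 addr0. Qed.
Lemma linN x : T (- x) = - T x.
Proof. by rewrite -scaleN1r linZ scaleN1r. Qed.
Lemma linB x y : T (x - y) = T x - T y.
Proof. by rewrite linD linN. Qed.
End LinT.

Lemma lin_comp S T : lin S -> lin T -> lin (fun x => S (T x)).
Proof. by move=> hS hT a x y; rewrite hT hS. Qed.
Lemma lin_add S T : lin S -> lin T -> lin (fun x => S x + T x).
Proof.
move=> hS hT a x y; rewrite hS hT scalerDr.
by rewrite -!addrA; congr (_ + _); rewrite addrCA.
Qed.
Lemma lin_opp S : lin S -> lin (fun x => - S x).
Proof. by move=> hS a x y; rewrite hS opprD scalerN. Qed.
Lemma lin_sub S T : lin S -> lin T -> lin (fun x => S x - T x).
Proof. by move=> hS hT; apply: lin_add => //; apply: lin_opp. Qed.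
Lemma lin_scale S (t : R[i]) : lin S -> lin (fun x => t *: S x).
Proof. by move=> hS a x y; rewrite hS scalerDr !scalerA mulrC. Qed.
Lemma lin_id : lin id.
Proof. by []. Qed.

Lemma semi_cs T : lin T -> sa T -> pos T ->
  forall x y, rr (T x) y ^+ 2 <= rr (T x) x * rr (T y) y.
Proof.
move=> hT sT pT x y; apply: cs_real; first exact: pT.
move=> t; have := pT (x + t%:C *: y).
rewrite linD // linZ // !rrDl !rrDr !rrZl !rrZr.
have -> : rr (T y) x = rr (T x) y by rewrite sT rrC.
by rewrite expr2; lra.
Qed.

Lemma cs x y : rr x y ^+ 2 <= rr x x * rr y y.
Proof.
apply: (@semi_cs id); [exact: lin_id | by move=> * | move=> z; exact: rr_ge0].
Qed.

Lemma cs_abs x y : `|rr x y| <= nrm x * nrm y.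
Proof.
rewrite !hnormE -sqrtrM ?rr_ge0 // -sqrtr_sqr.
by apply: ler_wsqrtr; apply: cs.
Qed.

Lemma cs_le x y : rr x y <= nrm x * nrm y.
Proof. exact: le_trans (ler_norm _) (cs_abs x y). Qed.
Lemma cs_ge x y : - (nrm x * nrm y) <= rr x y.
Proof. by have := cs_abs x y; rewrite ler_norml => /andP[]. Qed.

Definition le1 (T : V -> V) := forall x, rr (T x) x <= rr x x.

Lemma sq_le T : lin T -> sa T -> pos T -> le1 T -> forall x, rr (T x) (T x) <= rr (T x) x.
Proof.
move=> hT sT pT lT x.
have h := semi_cs hT sT pT x (T x).
have h1 := lT (T x); have h2 := pT x; have h3 := rr_ge0 (T x).
have h4 := pT (T x).
set u := rr (T x) (T x) in h h1 h3 *.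
set v := rr (T x) x in h h2 *.
set w := rr (T (T x)) (T x) in h h1 h4 *.
have : u ^+ 2 <= v * u by apply: le_trans h _; rewrite ler_wpM2l.
rewrite expr2 => hh; nra.
Qed.

Section Nagy.
Variable A : V -> V.
Hypotheses (lA : lin A) (sA : sa A) (pA : pos A) (oA : le1 A).

Fixpoint An (n : nat) : V -> V :=
  match n with 0 => A | n.+1 => fun x => An n x - An n (An n x) end.

Lemma An_props n : [/\ lin (An n), sa (An n), pos (An n) & le1 (An n)].
Proof.
elim: n => [|n [l s p o]] /=; first by [].
split.
- by apply: lin_sub => //; apply: lin_comp.
- by move=> x y; rewrite rrBl rrBr s s s.
- move=> x; rewrite rrBl (s (An n x) x); have := sq_le l s p o x; lra.
- move=> x; rewrite rrBl (s (An n x) x); have := o x; have := rr_ge0 (An n x); lra.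
Qed.

Variable S : V -> V.
Hypotheses (lS : lin S) (sS : sa S) (pS : pos S) (cS : forall x, S (A x) = A (S x)).

Lemma An_comm n x : S (An n x) = An n (S x).
Proof.
elim: n x => [|n IH] x /=; first exact: cS.
by rewrite linB // IH IH IH.
Qed.

Lemma nagy x : 0 <= rr (S (A x)) x.
Proof.
pose f n := rr (An n x) x.
pose a n := nrm (An n x).
have K1 : forall n, rr (S (An n x)) x <= rr (S (A x)) x.
  elim=> [|n IH] //=.
  apply: le_trans IH; rewrite linB // rrBl.
  have [l s p o] := An_props n.
  have e : rr (S (An n (An n x))) x = rr (S (An n x)) (An n x).
    by rewrite An_comm (s (S (An n x)) x).
  rewrite e; have := pS (An n x); lra.
apply: (@squeeze _ _ (nrm (S x)) a f).
- by move=> n; have [l s p o] := An_props n; apply: p.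
- move=> n; rewrite /f /a /= hnorm2 rrBl.
  by have [l s p o] := An_props n; rewrite (s (An n x) x).
- by move=> n; apply: hnorm_ge0.
- move=> n; apply: le_trans (K1 n).
  by rewrite sS mulrC; apply: cs_ge.
Qed.
End Nagy.

Lemma sa_comp S T : sa S -> sa T -> forall x y, rr (S (T x)) y = rr x (T (S y)).
Proof. by move=> hS hT x y; rewrite hS hT. Qed.

Section Normalize.
Variable P : V -> V.
Hypotheses (lP : lin P) (sP : sa P) (pP : pos P).
Variable c : R.
Hypotheses (c0 : 0 < c) (bP : forall x, rr (P x) x <= c * rr x x).
Definition nA x := (c^-1)%:C *: P x.
Lemma nA_lin : lin nA.
Proof. exact: lin_scale. Qed.
Lemma nA_sa : sa nA.
Proof. by move=> x y; rewrite /nA rrZl rrZr sP. Qed.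
Lemma nA_pos : pos nA.
Proof. by move=> x; rewrite /nA rrZl mulr_ge0 // invr_ge0 ltW. Qed.
Lemma nA_le1 : le1 nA.
Proof.
move=> x; rewrite /nA rrZl ler_pdivrMl //; exact: bP.
Qed.
Lemma PnA x : P x = c%:C *: nA x.
Proof.
by rewrite /nA scalerA -rmorphM /= mulfV ?gt_eqF // scale1r.
Qed.
End Normalize.

Section Comm.
Variables P B : V -> V.
Hypotheses (lP : lin P) (sP : sa P) (pP : pos P) (lB : lin B) (sB : sa B).
Variable c : R.
Hypotheses (c0 : 0 < c) (bP : forall x, rr (P x) x <= c * rr x x).
Hypothesis PPBB : forall x, P (P x) = B (B x).

Let D x := P (B x) - B (P x).
Let W x := P (D x).

Let lD : lin D.
Proof. by apply: lin_sub; apply: lin_comp. Qed.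
Let lW : lin W.
Proof. exact: lin_comp. Qed.
Let sW : sa W.
Proof.
move=> x y; rewrite /W /D !linB // !rrBl !rrBr.
have e1 : rr (P (P (B x))) y = rr x (P (P (B y))).
  by rewrite sP sP sB !PPBB.
have e2 : rr (P (B (P x))) y = rr x (P (B (P y))).
  by rewrite sP sB sP.
by rewrite e1 e2.
Qed.
Let anti x : W (P x) = - P (W x).
Proof.
rewrite /W /D /= !(linB lP) (PPBB x) (PPBB (B x)).
by rewrite opprB.
Qed.

Let S x := W (W x).

Lemma comm_PB x : P (B x) = B (P x).
Proof.
have lS : lin S by apply: lin_comp.
have sS : sa S by move=> u v; rewrite /S sW sW.
have pS : pos S by move=> u; rewrite /S sW; apply: rr_ge0.
have cS : forall u, S (nA P c u) = nA P c (S u).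
  by move=> u; rewrite /S /nA !(linZ lW) anti (linN lW) anti opprK.
have key : forall u, rr (P (W u)) (W u) = 0.
  move=> u; apply/eqP; rewrite eq_le pP andbT.
  have lA : lin (nA P c) by apply: nA_lin.
  have sA : sa (nA P c) by apply: nA_sa.
  have pA : pos (nA P c) by apply: nA_pos.
  have oA : le1 (nA P c) by apply: nA_le1.
  have := nagy lA sA pA oA lS sS pS cS u.
  rewrite /S /nA !(linZ lW) rrZl anti (linN lW) rrNl.
  by rewrite sW pmulr_rge0 ?invr_gt0 // oppr_ge0.
have PW0 : forall u, P (W u) = 0.
  move=> u; apply: rr_eq0.
  have h := semi_cs lP sP pP (W u) (P (W u)).
  rewrite key mul0r in h.
  by apply/eqP; rewrite -sqrf_eq0 eq_le h sqr_ge0.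
have W0 : forall u, W u = 0.
  by move=> u; apply: rr_eq0; rewrite {1}/W sP PW0 rr0r.
have BD0 : forall u, B (D u) = 0.
  by move=> u; apply: rr_eq0; rewrite sB -PPBB -/(W u) PW0 rr0r.
apply/eqP; rewrite -subr_eq0; apply/eqP; apply: rr_eq0.
rewrite -/(D x) {1}/D rrBl sB sP.
by rewrite -/(W x) W0 BD0 !rr0r subrr.
Qed.
End Comm.

Section AbsLe.
Variables P B : V -> V.
Hypotheses (lP : lin P) (sP : sa P) (pP : pos P) (lB : lin B) (sB : sa B).
Variable c : R.
Hypotheses (c0 : 0 < c) (bP : forall x, rr (P x) x <= c * rr x x).
Hypothesis PPBB : forall x, P (P x) = B (B x).
Hypothesis PB : forall x, P (B x) = B (P x).

Let G x := P x + B x.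
Let A := nA P c.
Let lG : lin G. Proof. exact: lin_add. Qed.
Let sG : sa G. Proof. by move=> x y; rewrite /G rrDl rrDr sP sB. Qed.
Let lA : lin A. Proof. by apply: nA_lin. Qed.
Let sA : sa A. Proof. by apply: nA_sa. Qed.
Let pA : pos A. Proof. by apply: nA_pos. Qed.
Let oA : le1 A. Proof. by apply: nA_le1. Qed.

Let GG x : G (G x) = P (G x) + P (G x).
Proof.
rewrite /G (linD lP) (linD lB) -PB -PPBB.
by rewrite [P (B x) + _]addrC.
Qed.
Let GP x : G (P x) = P (G x).
Proof. by rewrite /G (linD lP) PB. Qed.
Let GA x : G (A x) = A (G x).
Proof. by rewrite /A /nA (linZ lG) GP. Qed.

Let posGP y : 0 <= rr (G (P y)) (P y).
Proof.
have h : rr (G (G y)) (P y) = 2 * rr (G (P y)) (P y).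
  by rewrite GG rrDl GP mulr2n mulrDl mul1r.
have h2 : rr (G (G y)) (P y) = rr (P (G y)) (G y).
  by rewrite sG GP rrC.
have := pP (G y); rewrite -h2 h.
by rewrite pmulr_rge0.
Qed.

Let posGA y : 0 <= rr (G (A y)) (A y).
Proof.
have ci : 0 <= c^-1 by rewrite invr_ge0 ltW.
by rewrite /A /nA (linZ lG) rrZl rrZr mulr_ge0 // mulr_ge0.
Qed.

Let nGv v : nrm (G v) <= 2 * c * nrm (A v).
Proof.
have h : nrm (G v) ^+ 2 <= 2 * c * (nrm (G v) * nrm (A v)).
  rewrite hnorm2 -sG GG rrDl sP (PnA P c0 v) rrZr.
  have := cs_le (G v) (A v); have := hnorm_ge0 (G v); have := hnorm_ge0 (A v).
  move=> h1 h2 h3.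
  have : c * rr (G v) (A v) <= c * (nrm (G v) * nrm (A v)) by rewrite ler_pM2l.
  lra.
have := hnorm_ge0 (G v); have := hnorm_ge0 (A v).
set g := nrm (G v) in h *; set q := nrm (A v) in h *.
move=> h1 h2; have [g0|gn] := eqVneq g 0.
  by rewrite g0 mulr_ge0 // mulr_ge0 // ltW.
have gp : 0 < g by rewrite lt_def gn h2.
rewrite -(ler_pM2l gp); apply: le_trans h _.
by rewrite (_ : 2 * c * (g * q) = g * (2 * c * q)) //; ring.
Qed.

Fixpoint vs (x : V) n := match n with 0 => x | n.+1 => vs x n - A (vs x n) end.
Fixpoint ys (x : V) n := match n with 0 => 0 | n.+1 => ys x n + vs x n end.

Lemma vs_ys x n : x - vs x n = A (ys x n).
Proof.
elim: n => [|n IH] /=; first by rewrite subrr (lin0 lA).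
by rewrite (linD lA) -IH opprD opprK addrA.
Qed.

Lemma vs_dec x n : rr (vs x n.+1) (vs x n.+1) <= rr (vs x n) (vs x n) - nrm (A (vs x n)) ^+ 2.
Proof.
rewrite /= hnorm2 !rrBl !rrBr (rrC (vs x n) (A _)).
have := sq_le lA sA pA oA (vs x n); lra.
Qed.

Lemma vs_bnd x n : nrm (vs x n) <= nrm x.
Proof.
suff h : rr (vs x n) (vs x n) <= rr x x by rewrite !hnormE ler_wsqrtr.
elim: n => [|n IH] //; apply: le_trans IH; apply: le_trans (vs_dec x n) _.
by rewrite lerBlDr lerDl sqr_ge0.
Qed.

Lemma abs_le x : 0 <= rr (P x) x + rr (B x) x.
Proof.
rewrite -rrDl -/(G x).
apply: (@squeeze _ _ (6 * c * nrm x) (fun n => nrm (A (vs x n))) (fun n => rr (vs x n) (vs x n))).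
- by move=> n; apply: rr_ge0.
- by move=> n; apply: vs_dec.
- by move=> n; apply: hnorm_ge0.
move=> n; set v := vs x n; set u := x - v.
have e : rr (G x) x = rr (G u) u + 2 * rr (G v) x - rr (G v) v.
  rewrite /u (linB lG) !rrBl !rrBr.
  have : rr (G x) v = rr (G v) x by rewrite sG rrC.
  lra.
have pu : 0 <= rr (G u) u by rewrite /u vs_ys.
have h1 := cs_ge (G v) x.
have h2 := cs_le (G v) v.
have h3 := vs_bnd x n; rewrite -/v in h3.
have h4 := nGv v.
have n0 := hnorm_ge0 x; have n1 := hnorm_ge0 v; have n2 := hnorm_ge0 (G v).
have n3 := hnorm_ge0 (A v).
have h5 : nrm (G v) * nrm v <= nrm (G v) * nrm x by rewrite ler_wpM2l.
have h6 : nrm (G v) * nrm x <= 2 * c * nrm (A v) * nrm x by rewrite ler_wpM2r.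
rewrite e; nra.
Qed.
End AbsLe.

Lemma ipDr x y z : ip z (x + y) = ip z x + ip z y.
Proof. by rewrite ipH ipDl rmorphD /= -!ipH. Qed.
Lemma ipZr a x z : ip z (a *: x) = conjc a * ip z x.
Proof. by rewrite ipH ipZl rmorphM /= -ipH. Qed.

Lemma pos_sa T : lin T -> (forall x, 0 <= ip (T x) x) -> sa T.
Proof.
move=> lT pT x y.
have h := ger0_Im (pT (x + 'i *: y)).
rewrite (linD lT) (linZ lT) !ipDl !ipDr !ipZl !ipZr in h.
have hx := ger0_Im (pT x); have hy := ger0_Im (pT y).
rewrite (rrC x) /rr; move: h hx hy.
move: (ip (T x) x) (ip (T x) y) (ip (T y) x) (ip (T y) y) => [a1 a2] [b1 b2] [c1 c2] [d1 d2] /=.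
move=> h hx hy; lra.
Qed.

Lemma homog2 (f : V -> R) (M : R) :
  (forall (s : R) z, f (s%:C *: z) = s ^+ 2 * f z) ->
  (forall z, nrm z = 1 -> f z <= M) -> forall z, f z <= M * rr z z.
Proof.
move=> hf hM z.
have [z0|zn] := eqVneq (rr z z) 0.
  rewrite z0 mulr0 (rr_eq0 z0) -(scale0r 0) -[0 : R[i]]/((0:R)%:C) hf.
  by rewrite expr0n /= mul0r.
have zp : 0 < rr z z by rewrite lt_def zn rr_ge0.
set t := nrm z.
have tp : 0 < t by rewrite /t hnormE sqrtr_gt0.
have t2 : t ^+ 2 = rr z z by rewrite /t hnorm2.
have := hM ((t^-1)%:C *: z).
rewrite hf.
have -> : nrm ((t^-1)%:C *: z) = 1.
  rewrite hnormE rrZl rrZr -t2 mulrA -expr2 exprVn mulVf ?sqrtr1 //.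
  by rewrite expf_eq0 gt_eqF.
move=> /(_ erefl); rewrite exprVn -t2 ler_pdivrMl ?exprn_gt0 //.
by rewrite mulrC.
Qed.

Section Final.
Variables B C P Q : V -> V.
Hypotheses (lB : lin B) (sB : sa B) (lC : lin C) (sC : sa C).
Hypotheses (lP : lin P) (sP : sa P) (pP : pos P) (lQ : lin Q) (sQ : sa Q) (pQ : pos Q).
Variables cP cQ : R.
Hypotheses (cP0 : 0 < cP) (bP : forall x, rr (P x) x <= cP * rr x x).
Hypotheses (cQ0 : 0 < cQ) (bQ : forall x, rr (Q x) x <= cQ * rr x x).
Hypotheses (PPBB : forall x, P (P x) = B (B x)) (QQCC : forall x, Q (Q x) = C (C x)).
Variables N w : R.
Hypotheses (N0 : 0 <= N) (w0 : 0 <= w).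
Hypothesis hN : forall z, nrm z <= 1 -> nrm (B (B z) + C (C z)) <= N.
Hypothesis hw : forall z, nrm z = 1 -> rr (P z) (Q z) <= w.

Lemma abs2 (T U : V -> V) : lin T -> sa T -> lin U -> sa U -> pos U ->
  (forall x, rr (U x) x <= cP * rr x x) \/ (forall x, rr (U x) x <= cQ * rr x x) ->
  (forall x, U (U x) = T (T x)) ->
  forall x, `|rr (T x) x| <= rr (U x) x.
Proof.
move=> lT sT lU sU pU bU UUTT x.
have [c [c0 bc]] : exists c, 0 < c /\ forall x, rr (U x) x <= c * rr x x.
  by case: bU => h; [exists cP | exists cQ].
have cm := comm_PB lU sU pU lT sT c0 bc UUTT.
have h1 := abs_le lU sU pU lT sT c0 bc UUTT cm x.
have lT' : lin (fun x => - T x) by apply: lin_opp.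
have sT' : sa (fun x => - T x) by move=> u v; rewrite rrNl rrNr sT.
have UU' : forall x, U (U x) = - T (- T x) by move=> u; rewrite (linN lT) opprK.
have cm' : forall x, U (- T x) = - T (U x) by move=> u; rewrite (linN lU) cm.
have h2 := abs_le lU sU pU lT' sT' c0 bc UU' cm' x.
rewrite rrNl in h2.
by rewrite ler_norml; apply/andP; split; lra.
Qed.

Lemma perx x : nrm x <= 1 -> nrm (B x + C x) ^+ 2 <= N + 2 * w.
Proof.
move=> hx.
set L := N + 2 * w.
have L0 : 0 <= L by rewrite /L addr_ge0 // mulr_ge0.
set K := Num.sqrt L.
have K0 : 0 <= K by apply: sqrtr_ge0.
have KK : K ^+ 2 = L by rewrite sqr_sqrtr.
set X := fun z => B z + C z.
set Y := fun z => P z + Q z.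
have lX : lin X by apply: lin_add.
have sX : sa X by move=> u v; rewrite /X rrDl rrDr sB sC.
have fN : forall z, rr (B (B z) + C (C z)) z <= N * rr z z.
  apply: homog2.
    by move=> s z; rewrite !(linZ lB) !(linZ lC) -scalerDr rrZl rrZr mulrA expr2.
  move=> z hz; apply: le_trans (cs_le _ _) _; rewrite hz mulr1; apply: hN.
  by rewrite hz.
have fw : forall z, rr (P z) (Q z) <= w * rr z z.
  apply: homog2; last exact: hw.
  by move=> s z; rewrite (linZ lP) (linZ lQ) rrZl rrZr mulrA expr2.
have hY : forall z, rr (Y z) (Y z) <= L * rr z z.
  move=> z; rewrite /Y !rrDl !rrDr (rrC (Q z) (P z)).
  rewrite -(sP (P z)) -(sQ (Q z)) PPBB QQCC.
  have := fN z; rewrite rrDl; have := fw z; rewrite /L; lra.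
have hY2 : forall z, rr (Y z) z <= K * rr z z.
  move=> z; apply: le_trans (cs_le _ _) _.
  rewrite -(hnorm2 z) expr2 mulrA ler_wpM2r ?hnorm_ge0 //.
  rewrite hnormE /K -sqrtrM // -hnorm2 hnormE ler_wsqrtr //.
  by rewrite -hnormE hnorm2; apply: hY.
have hXY : forall z, `|rr (X z) z| <= K * rr z z.
  move=> z; apply: (le_trans _ (hY2 z)).
  rewrite /X /Y !rrDl; apply: le_trans (ler_normD _ _) _.
  apply: lerD.
    by apply: (abs2 lB sB lP sP pP) => //; left.
  by apply: (abs2 lC sC lQ sQ pQ) => //; right.
rewrite (_ : B x + C x = X x) //.
clearbody X Y.
set u := X x.
have pol : forall t : R, 4 * t * rr u u <= K * (2 * rr x x + 2 * (t ^+ 2 * rr u u)).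
  move=> t; set y := t%:C *: u.
  have e : rr (X (x + y)) (x + y) - rr (X (x - y)) (x - y) = 4 * rr u y.
    rewrite (linD lX) (linB lX) !rrDl !rrDr ?rrNl ?rrNr.
    have : rr (X y) x = rr u y by rewrite sX rrC.
    rewrite -/u; lra.
  have e2 : rr (x + y) (x + y) + rr (x - y) (x - y) = 2 * rr x x + 2 * rr y y.
    rewrite !rrDl !rrDr ?rrNl ?rrNr; lra.
  have e3 : rr u y = t * rr u u by rewrite /y rrZr.
  have e4 : rr y y = t ^+ 2 * rr u u by rewrite /y rrZl rrZr mulrA expr2.
  have h1 := hXY (x + y); have h2 := hXY (x - y).
  move: h1 h2; rewrite !ler_norml => /andP[_ h1] /andP[h2 _].
  rewrite -e4 -e2 mulrDr -mulrA -e3 -e; lra.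
have hxx : rr x x <= 1.
  by rewrite -hnorm2 expr_le1 // hnorm_ge0.
have a0 := rr_ge0 u; have b0 := rr_ge0 x.
suff : rr u u <= L * rr x x.
  move=> h; rewrite hnorm2; apply: le_trans h _.
  by rewrite ler_piMr.
have [Kz|Kn] := eqVneq K 0.
  have := pol 1; rewrite Kz mul0r mulr1 => h.
  have -> : rr u u = 0 by lra.
  by rewrite mulr_ge0.
have Kp : 0 < K by rewrite lt_def Kn K0.
have := pol K^-1.
have e1 : K * (4 * K^-1 * rr u u) = 4 * rr u u by field.
have e2 : K * (K * (2 * rr x x + 2 * (K^-1 ^+ 2 * rr u u))) = 2 * (K ^+ 2 * rr x x) + 2 * rr u u by field.
move=> h; have := ler_wpM2l (ltW Kp) h; rewrite e1 e2 KK; lra.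
Qed.
End Final.

Lemma Re_le_cmod (z : R[i]) : complex.Re z <= cmod z.
Proof.
rewrite /cmod; apply: le_trans (ler_norm _) _.
rewrite -sqrtr_sqr ler_wsqrtr // lerDl sqr_ge0 //.
Qed.
Lemma Im_ip a b : complex.Im (ip a b) = rr a ('i *: b).
Proof. rewrite /rr ipZr; by case: (ip a b) => p q /=; lra. Qed.

Lemma nrm_i b : nrm ('i *: b) = nrm b.
Proof.
rewrite !hnormE /rr ipZl ipZr; congr Num.sqrt.
by case: (ip b b) => p q /=; lra.
Qed.

Lemma cmod_le (a : R[i]) : cmod a <= `|complex.Re a| + `|complex.Im a|.
Proof.
rewrite /cmod; set p := complex.Re a; set q := complex.Im a.
have e : `|p| + `|q| = Num.sqrt ((`|p| + `|q|) ^+ 2).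
  by rewrite sqrtr_sqr (ger0_norm (addr_ge0 (normr_ge0 p) (normr_ge0 q))).
rewrite e; apply: ler_wsqrtr.
have hp : p ^+ 2 = `|p| ^+ 2 by rewrite real_normK // num_real.
have hq : q ^+ 2 = `|q| ^+ 2 by rewrite real_normK // num_real.
rewrite hp hq sqrrD.
have : 0 <= `|p| * `|q| *+ 2 by rewrite mulrn_wge0 // mulr_ge0.
lra.
Qed.

Lemma cmod_ip a b : cmod (ip a b) <= 2 * (nrm a * nrm b).
Proof.
apply: le_trans (cmod_le _) _.
have -> : 2 * (nrm a * nrm b) = nrm a * nrm b + nrm a * nrm b by ring.
apply: lerD; first exact: cs_abs.
by rewrite Im_ip -(nrm_i b); apply: cs_abs.
Qed.

Lemma cmod_ge0 (z : R[i]) : 0 <= cmod z.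
Proof. exact: sqrtr_ge0. Qed.

Definition bnd (T : V -> V) := exists M : R, forall x, nrm (T x) <= M * nrm x.

Lemma bnd_c T : bnd T -> exists c, 0 < c /\ forall x, rr (T x) x <= c * rr x x.
Proof.
case=> M hM; exists (Num.max M 1); split; first by rewrite lt_max ltr01 orbT.
move=> x; apply: le_trans (cs_le _ _) _.
rewrite -hnorm2 expr2 mulrA ler_wpM2r ?hnorm_ge0 //.
apply: le_trans (hM x) _; rewrite ler_wpM2r ?hnorm_ge0 //.
by rewrite le_max lexx.
Qed.

Lemma opnorm_ub T : bnd T -> forall z, nrm z <= 1 -> nrm (T z) <= opnorm ip T.
Proof.
case=> M hM z hz; apply: ub_le_sup; last by exists z.
exists (`|M|) => r [x [hx ->]].
apply: le_trans (hM x) _; apply: le_trans (ler_norm _) _.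
rewrite normrM (ger0_norm (hnorm_ge0 x)) ler_piMr //.
Qed.

Lemma nrm0 : nrm 0 = 0.
Proof. by rewrite hnormE rr0l sqrtr0. Qed.

Lemma opnorm_ge0 T : bnd T -> 0 <= opnorm ip T.
Proof.
move=> hT; apply: le_trans (opnorm_ub hT (z := 0) _); first exact: hnorm_ge0.
by rewrite nrm0.
Qed.

Lemma opnorm_le T L : 0 <= L -> (forall x, nrm x <= 1 -> nrm (T x) ^+ 2 <= L) ->
  opnorm ip T ^+ 2 <= L.
Proof.
move=> L0 h.
have hs : opnorm ip T <= Num.sqrt L.
  apply: ge_sup.
    by exists (nrm (T 0)), 0; split => //; rewrite nrm0.
  move=> r [x [hx ->]].
  rewrite -(ger0_norm (hnorm_ge0 (T x))) -sqrtr_sqr.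
  exact: ler_wsqrtr (h x hx).
have s0 : 0 <= opnorm ip T.
  apply: le_trans (hnorm_ge0 (T 0)) _; apply: ub_le_sup; last first.
    by exists 0; split => //; rewrite nrm0.
  exists (Num.sqrt L) => r [x [hx ->]].
  rewrite -(ger0_norm (hnorm_ge0 (T x))) -sqrtr_sqr.
  exact: ler_wsqrtr (h x hx).
rewrite -(sqr_sqrtr L0) ler_sqr ?nnegrE ?sqrtr_ge0 //.
Qed.

Lemma numrad_ub T : bnd T -> forall z, nrm z = 1 -> cmod (ip (T z) z) <= numrad ip T.
Proof.
case=> M hM z hz; apply: ub_le_sup; last by exists z.
exists (2 * `|M|) => r [x [hx ->]].
apply: le_trans (cmod_ip _ _) _; rewrite hx mulr1 ler_wpM2l //.
apply: le_trans (hM x) _; rewrite hx mulr1; exact: ler_norm.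
Qed.

Lemma numrad_ge0 T : bnd T -> 0 <= numrad ip T.
Proof.
move=> hT; have [[z hz]|nz] := pselect (exists z, nrm z = 1).
  by apply: le_trans (numrad_ub hT hz); apply: cmod_ge0.
rewrite /numrad (_ : [set r | _] = set0)%classic ?sup0 //.
apply/seteqP; split => r //= [x [hx _]]; exfalso; apply: nz; by exists x.
Qed.

Lemma nrm_tri u v : nrm (u + v) <= nrm u + nrm v.
Proof.
have h0 : 0 <= nrm u + nrm v by rewrite addr_ge0 ?hnorm_ge0.
rewrite -(ger0_norm h0) -sqrtr_sqr hnormE ler_wsqrtr //.
rewrite rrDl !rrDr sqrrD -!hnorm2 (rrC v u).
have := cs_le u v; lra.
Qed.

Lemma nrmN u : nrm (- u) = nrm u.
Proof. by rewrite !hnormE rrNl rrNr opprK. Qed.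

Lemma bnd_pos T : bnd T -> exists M, 0 <= M /\ forall x, nrm (T x) <= M * nrm x.
Proof.
case=> M hM; exists (Num.max M 0); split; first by rewrite le_max lexx orbT.
move=> x; apply: le_trans (hM x) _; rewrite ler_wpM2r ?hnorm_ge0 //.
by rewrite le_max lexx.
Qed.

Lemma bnd_comp S T : bnd S -> bnd T -> bnd (fun x => S (T x)).
Proof.
move=> /bnd_pos [M [M0 hM]] /bnd_pos [N [N0 hN]]; exists (M * N) => x.
apply: le_trans (hM _) _; rewrite -mulrA ler_wpM2l //.
Qed.

Lemma bnd_add S T : bnd S -> bnd T -> bnd (fun x => S x + T x).
Proof.
move=> /bnd_pos [M [M0 hM]] /bnd_pos [N [N0 hN]]; exists (M + N) => x.
apply: le_trans (nrm_tri _ _) _; rewrite mulrDl; exact: lerD.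
Qed.

Lemma bnd_opp T : bnd T -> bnd (fun x => - T x).
Proof. by case=> M hM; exists M => x; rewrite nrmN. Qed.

Lemma sa_of T : selfadjoint ip T -> sa T.
Proof. by move=> h x y; rewrite /rr h. Qed.

Lemma pos_of T : (forall x, 0 <= ip (T x) x) -> pos T.
Proof. by move=> h x; have := h x; rewrite /rr lecE => /andP[]. Qed.

Lemma main_in B C P Q : bounded_op ip B -> bounded_op ip C ->
  selfadjoint ip B -> selfadjoint ip C -> is_abs ip B P -> is_abs ip C Q ->
  Num.max (opnorm ip (fun x => B x + C x) ^+ 2) (opnorm ip (fun x => B x - C x) ^+ 2)
    <= opnorm ip (fun x => B (B x) + C (C x)) + 2 * numrad ip (fun x => P (Q x)).
Proof.
move=> [lB bB] [lC bC] hB hC [[lP bP] pP0 hP] [[lQ bQ] pQ0 hQ].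
have sB := sa_of hB; have sC := sa_of hC.
have pP := pos_of pP0; have pQ := pos_of pQ0.
have sP := pos_sa lP pP0; have sQ := pos_sa lQ pQ0.
have PPBB : forall x, P (P x) = B (B x).
  move=> x; apply/eqP; rewrite -subr_eq0; apply/eqP; apply: ipD.
  by rewrite {1}ipBl hP -hB subrr.
have QQCC : forall x, Q (Q x) = C (C x).
  move=> x; apply/eqP; rewrite -subr_eq0; apply/eqP; apply: ipD.
  by rewrite {1}ipBl hQ -hC subrr.
have [cP [cP0 cPb]] := bnd_c bP.
have [cQ [cQ0 cQb]] := bnd_c bQ.
have bN : bnd (fun x => B (B x) + C (C x)) by apply: bnd_add; apply: bnd_comp.
have bw : bnd (fun x => P (Q x)) by apply: bnd_comp.
set N := opnorm ip (fun x => B (B x) + C (C x)); set w := numrad ip (fun x => P (Q x)).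
have N0 : 0 <= N by apply: opnorm_ge0.
have w0 : 0 <= w by apply: numrad_ge0.
have hN : forall z, nrm z <= 1 -> nrm (B (B z) + C (C z)) <= N.
  by move=> z hz; apply: (opnorm_ub bN).
have hw : forall z, nrm z = 1 -> rr (P z) (Q z) <= w.
  move=> z hz; rewrite sP rrC; apply: le_trans (Re_le_cmod _) _.
  exact: (numrad_ub bw).
have L0 : 0 <= N + 2 * w by rewrite addr_ge0 // mulr_ge0.
rewrite ge_max; apply/andP; split; apply: opnorm_le => // x hx.
  exact: (perx lB sB lC sC lP sP pP lQ sQ pQ cP0 cPb cQ0 cQb PPBB QQCC N0 w0 hN hw).
have lC' : lin (fun x => - C x) by apply: lin_opp.
have sC' : sa (fun x => - C x) by move=> u v; rewrite rrNl rrNr sC.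
have QQ' : forall x, Q (Q x) = - C (- C x) by move=> u; rewrite (linN lC) opprK.
have hN' : forall z, nrm z <= 1 -> nrm (B (B z) + - C (- C z)) <= N.
  by move=> z hz; rewrite (linN lC) opprK; apply: hN.
exact: (perx lB sB lC' sC' lP sP pP lQ sQ pQ cP0 cPb cQ0 cQb PPBB QQ' N0 w0 hN' hw).
Qed.

End Basics.

Unset Implicit Arguments.
Local Close Scope complex_scope.

Theorem mainTheorem14 (R : realType) (V : lmodType R[i]) (ip : V -> V -> R[i])
  (hip : is_inner_product ip) (hcomplete : complete_ip ip)
  (B C : V -> V)
  (hB : bounded_op ip B) (hC : bounded_op ip C)
  (sB : selfadjoint ip B) (sC : selfadjoint ip C)
  (absB absC : V -> V)
  (habsB : is_abs ip B absB) (habsC : is_abs ip C absC) :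
  Num.max (opnorm ip (fun x => B x + C x) ^+ 2)
          (opnorm ip (fun x => B x - C x) ^+ 2)
    <= opnorm ip (fun x => B (B x) + C (C x))
       + 2 * numrad ip (fun x => absB (absC x)).
Proof. exact: main_in. Qed.
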